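(* Up to shifting and reversing indices, there is exactly one 4-chain having three consecutive equal terms, namely the 4-chain $(u_n)$ with $u_0=u_1=u_2=u_3=-1$ (whose neighbouring terms are $u_{-1}=u_4=1$, $u_{-2}=u_5=-3$, $u_{-3}=u_6=-17$, $u_{-4}=u_7=1541,\dots$).
   Context: A 4-chain is a bi-infinite sequence of integers $(u_n)_{n\in\mathbb Z}$ satisfying $u_{n-1}u_{n+1}=u_n^3+u_n^{f(n)}+1$ for all $n\in\mathbb Z$, where $f(n)=1$ if $n\equiv 0,3\pmod 4$ and $f(n)=2$ if $n\equiv 1,2\pmod 4$. Two 4-chains $(u_n)$, $(v_n)$ are considered the same if there is $k\in\mathbb Z$ with $u_n=v_{k+n}$ for all $n$ or $u_n=v_{k-n}$ for all $n$. *)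

(* Defs.v *)
From Stdlib Require Import ZArith.
Open Scope Z_scope.

Definition f4 (n : Z) : Z :=
  if orb (n mod 4 =? 1) (n mod 4 =? 2) then 2 else 1.

Definition is_4chain (u : Z -> Z) : Prop :=
  forall n : Z, u (n - 1) * u (n + 1) = u n ^ 3 + u n ^ f4 n + 1.

Definition same_chain (u v : Z -> Z) : Prop :=
  exists k : Z, (forall n, u n = v (k + n)) \/ (forall n, u n = v (k - n)).

Definition has_three_equal (u : Z -> Z) : Prop :=
  exists n : Z, u n = u (n + 1) /\ u (n + 1) = u (n + 2).

(* Main.v *)
Require Import Defs.
From Stdlib Require Import ZArith Lia.
Open Scope Z_scope.

Lemma f4_cases n : (f4 n = 1 /\ (n mod 4 = 0 \/ n mod 4 = 3)) \/ (f4 n = 2 /\ (n mod 4 = 1 \/ n mod 4 = 2)).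
Proof.
  unfold f4. destruct (Z.eqb_spec (n mod 4) 1); destruct (Z.eqb_spec (n mod 4) 2); simpl; try lia.
  left; split; auto. pose proof (Z.mod_pos_bound n 4). lia.
Qed.

Lemma f4_12 n : f4 n = 1 \/ f4 n = 2.
Proof. destruct (f4_cases n); lia. Qed.

Lemma f4_sum n : (f4 (n-1) = 1 /\ f4 (n+1) = 2) \/ (f4 (n-1) = 2 /\ f4 (n+1) = 1).
Proof.
  pose proof (Z.mod_pos_bound (n-1) 4); pose proof (Z.mod_pos_bound (n+1) 4).
  pose proof (Z.div_mod (n-1) 4); pose proof (Z.div_mod (n+1) 4).
  destruct (f4_cases (n-1)) as [[A B]|[A B]]; destruct (f4_cases (n+1)) as [[C D]|[C D]]; lia.
Qed.

Lemma f4_shift q m : f4 (4*q + m) = f4 m.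
Proof.
  pose proof (Z.mod_pos_bound (4*q+m) 4); pose proof (Z.mod_pos_bound m 4).
  pose proof (Z.div_mod (4*q+m) 4); pose proof (Z.div_mod m 4).
  destruct (f4_cases (4*q+m)) as [[A B]|[A B]]; destruct (f4_cases m) as [[C D]|[C D]]; lia.
Qed.

Lemma f4_sym n : f4 (3 - n) = f4 n.
Proof.
  pose proof (Z.mod_pos_bound (3-n) 4); pose proof (Z.mod_pos_bound n 4).
  pose proof (Z.div_mod (3-n) 4); pose proof (Z.div_mod n 4).
  destruct (f4_cases (3-n)) as [[A B]|[A B]]; destruct (f4_cases n) as [[C D]|[C D]]; lia.
Qed.

Lemma Pnz y e : (e = 1 \/ e = 2) -> y^3 + y^e + 1 <> 0.
Proof.
  intros [-> | ->]; rewrite ?Z.pow_1_r, ?Z.pow_2_r;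
  replace (y^3) with (y*y*y) by ring;
  (destruct (Z.le_gt_cases 0 y); [nia|]);
  (destruct (Z.eq_dec y (-1)); [subst; lia|]);
  assert (y*y >= 4) by nia; nia.
Qed.

Lemma key w x y z e g h : (e = 1 \/ e = 2) -> (g = 1 /\ h = 2 \/ g = 2 /\ h = 1) ->
  x*z = y^3 + y^e + 1 -> w*y = x^3 + x^g + 1 -> (y | z^3 + z^h + 1).
Proof.
  intros He Hgh H1 H2.
  assert (Hk : exists k, x*z = 1 + y*k).
  { destruct He as [-> | ->]; [exists (y^2+1) | exists (y^2+y)]; rewrite H1; ring. }
  destruct Hk as [k Hc]. set (c := 1 + y*k) in *.
  assert (A : exists T, x^3 * (z^3 + z^h + 1) = y*T).
  { destruct Hgh as [[-> ->]|[-> ->]].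
    - exists (w + k*(c^2+c+1) + x*k*(c+1)).
      replace (x^3 * (z^3 + z^2 + 1)) with ((x*z)^3 + x*(x*z)^2 + x^3) by ring.
      rewrite Hc. rewrite !Z.mul_add_distr_l, (Z.mul_comm y w), H2. unfold c. ring.
    - exists (w + k*(c^2+c+1) + x^2*k).
      replace (x^3 * (z^3 + z^1 + 1)) with ((x*z)^3 + x^2*(x*z) + x^3) by ring.
      rewrite Hc. rewrite !Z.mul_add_distr_l, (Z.mul_comm y w), H2. unfold c. ring. }
  destruct A as [T HT].
  exists (z^3*T - k*(c^2+c+1)*(z^3 + z^h + 1)).
  transitivity ((x*z)^3*(z^3 + z^h + 1) - (c^3-1)*(z^3 + z^h + 1)).
  - rewrite Hc. ring.
  - replace ((x*z)^3*(z^3 + z^h + 1)) with (z^3*(x^3*(z^3 + z^h + 1))) by ring.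
    rewrite HT. unfold c. ring.
Qed.

Definition P (n x : Z) := x^3 + x^(f4 n) + 1.

Fixpoint ap (n : nat) : Z * Z :=
  match n with
  | O => (-1, -1)
  | S m => let (p, q) := ap m in (q, P (Z.of_nat m + 1) q / p)
  end.

Definition a n := fst (ap n).

Lemma a_S n : snd (ap n) = a (S n).
Proof. unfold a; simpl; destruct (ap n); reflexivity. Qed.

Lemma a_SS n : a (S (S n)) = P (Z.of_nat n + 1) (a (S n)) / a n.
Proof.
  unfold a at 1; simpl. rewrite <- (a_S n). unfold a. destruct (ap n); reflexivity.
Qed.

Definition relN n := a n * a (n+2) = P (Z.of_nat n + 1) (a (n+1)).

Lemma inv n : relN n /\ relN (n+1) /\ a n <> 0 /\ a (n+1) <> 0 /\ a (n+2) <> 0.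
Proof.
  induction n as [|n IH].
  - unfold relN; vm_compute; repeat split; discriminate.
  - destruct IH as (R0 & R1 & N0 & N1 & N2).
    assert (N3 : a (n+3) <> 0).
    { intro E. unfold relN in R1. replace (n+1+2)%nat with (n+3)%nat in R1 by lia.
      rewrite E, Z.mul_0_r in R1. symmetry in R1. revert R1. apply Pnz, f4_12. }
    replace (S n) with (n+1)%nat by lia.
    replace (n+1+1)%nat with (n+2)%nat by lia. replace (n+1+2)%nat with (n+3)%nat by lia.
    split; [exact R1|]. split; [|tauto].
    unfold relN in *.
    replace (n+1+1)%nat with (n+2)%nat in R1 by lia. replace (n+1+2)%nat with (n+3)%nat in R1 by lia.
    replace (n+2+2)%nat with (S (S (n+2))) by lia. rewrite a_SS.
    replace (S (n+2)) with (n+3)%nat by lia. replace (n+2+1)%nat with (n+3)%nat by lia.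
    assert (D : (a (n+2) | P (Z.of_nat (n+2) + 1) (a (n+3)))).
    { unfold P in *.
      destruct (f4_sum (Z.of_nat n + 2)) as [[G H]|[G H]];
      (eapply (key (a n) (a (n+1)) (a (n+2)) (a (n+3)) (f4 (Z.of_nat (n+1) + 1)) (f4 (Z.of_nat n + 1)));
       [apply f4_12 | | exact R1 | exact R0]);
      replace (Z.of_nat n + 2 - 1) with (Z.of_nat n + 1) in G by lia;
      replace (Z.of_nat n + 2 + 1) with (Z.of_nat (n+2) + 1) in H by lia; lia. }
    destruct D as [q Hq]. rewrite Hq, Z.div_mul by exact N2. ring.
Qed.

Definition u (n : Z) : Z := if 0 <=? n then a (Z.to_nat n) else a (Z.to_nat (3 - n)).

Lemma u_nat k : u (Z.of_nat k) = a k.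
Proof. unfold u. rewrite Nat2Z.id. destruct (Z.leb_spec 0 (Z.of_nat k)); [reflexivity| lia]. Qed.

Lemma u_sym n : u (3 - n) = u n.
Proof.
  unfold u. destruct (Z.leb_spec 0 (3-n)); destruct (Z.leb_spec 0 n); try lia.
  { assert (n = 0 \/ n = 1 \/ n = 2 \/ n = 3) as [ -> | [ -> | [ -> | -> ] ] ] by lia; vm_compute; reflexivity. }
  all: replace (3 - (3-n)) with n by lia; reflexivity.
Qed.

Lemma u_rel_pos n : 1 <= n -> u (n-1) * u (n+1) = u n ^ 3 + u n ^ f4 n + 1.
Proof.
  intro Hn. destruct (inv (Z.to_nat (n-1))) as [R _].
  unfold relN, P in R.
  assert (En : n = Z.of_nat (Z.to_nat (n-1)) + 1) by lia.
  set (k := Z.to_nat (n-1)) in *. clearbody k. subst n.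
  replace (Z.of_nat k + 1 - 1) with (Z.of_nat k) by lia.
  replace (Z.of_nat k + 1 + 1) with (Z.of_nat (k+2)) by lia.
  replace (Z.of_nat k + 1) with (Z.of_nat (k+1)) by lia.
  rewrite !u_nat, R, Nat2Z.inj_add. reflexivity.
Qed.

Lemma u_chain : is_4chain u.
Proof.
  intro n. destruct (Z.le_gt_cases 1 n). { now apply u_rel_pos. }
  rewrite <- (u_sym (n-1)), <- (u_sym (n+1)), <- (u_sym n), <- (f4_sym n).
  replace (3 - (n-1)) with ((3-n)+1) by lia. replace (3 - (n+1)) with ((3-n)-1) by lia.
  rewrite Z.mul_comm. apply u_rel_pos. lia.
Qed.

Lemma chain_nz v : is_4chain v -> forall n, v n <> 0.
Proof.
  intros C n E. specialize (C (n+1)). replace (n+1-1) with n in C by lia.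
  rewrite E, Z.mul_0_l in C. symmetry in C. revert C. apply Pnz, f4_12.
Qed.

Lemma chain_uniq v w k : is_4chain v -> is_4chain w -> v k = w k -> v (k+1) = w (k+1) ->
  forall n, v n = w n.
Proof.
  intros Cv Cw E0 E1.
  assert (F : forall j : nat, v (k + Z.of_nat j) = w (k + Z.of_nat j) /\
                            v (k + Z.of_nat j + 1) = w (k + Z.of_nat j + 1)).
  { induction j as [|j [A B]].
    - simpl. rewrite Z.add_0_r. auto.
    - replace (k + Z.of_nat (S j)) with (k + Z.of_nat j + 1) by lia. split; [exact B|].
      pose proof (Cv (k + Z.of_nat j + 1)) as X. pose proof (Cw (k + Z.of_nat j + 1)) as Y.
      replace (k + Z.of_nat j + 1 - 1) with (k + Z.of_nat j) in X, Y by lia.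
      rewrite A, B, <- Y in X.
      apply Z.mul_reg_l in X; [exact X|]. apply chain_nz; auto. }
  assert (G : forall j : nat, v (k - Z.of_nat j) = w (k - Z.of_nat j) /\
                            v (k - Z.of_nat j + 1) = w (k - Z.of_nat j + 1)).
  { induction j as [|j [A B]].
    - simpl. rewrite Z.sub_0_r. auto.
    - replace (k - Z.of_nat (S j) + 1) with (k - Z.of_nat j) by lia. split; [|exact A].
      pose proof (Cv (k - Z.of_nat j)) as X. pose proof (Cw (k - Z.of_nat j)) as Y.
      replace (k - Z.of_nat j - 1) with (k - Z.of_nat (S j)) in X, Y by lia.
      replace (k - Z.of_nat j + 1) with (k - Z.of_nat j + 1) in X, Y by lia.
      rewrite A, B, <- Y in X. rewrite !(Z.mul_comm _ (w (k - Z.of_nat j + 1))) in X.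
      apply Z.mul_reg_l in X; [exact X|]. apply chain_nz; auto. }
  intro n. destruct (Z.le_gt_cases k n).
  - replace n with (k + Z.of_nat (Z.to_nat (n-k))) by lia. apply F.
  - replace n with (k - Z.of_nat (Z.to_nat (k-n))) by lia. apply G.
Qed.

Lemma shift_chain v q : is_4chain v -> is_4chain (fun m => v (4*q + m)).
Proof.
  intros C m. cbv beta. rewrite <- (f4_shift q m).
  replace (4*q + (m-1)) with (4*q+m-1) by lia. replace (4*q + (m+1)) with (4*q+m+1) by lia.
  apply (C (4*q+m)).
Qed.

Lemma triple a0 e : (e = 1 \/ e = 2) -> a0 * a0 = a0^3 + a0^e + 1 -> e = 2 /\ a0 = -1.
Proof.
  intros [-> | ->] H; rewrite ?Z.pow_1_r, ?Z.pow_2_r in H; replace (a0^3) with (a0*a0*a0) in H by ring.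
  - exfalso. destruct (Z.le_gt_cases 2 a0); [nia|].
    destruct (Z.le_gt_cases a0 (-2)); [nia|].
    assert (a0 = -1 \/ a0 = 0 \/ a0 = 1) as [ -> | [ -> | -> ] ] by lia; lia.
  - split; auto. destruct (Z.le_gt_cases 0 a0); [nia|].
    destruct (Z.le_gt_cases a0 (-2)); [nia| lia].
Qed.

Theorem mainTheorem8 :
  exists u : Z -> Z,
    is_4chain u /\
    u 0 = -1 /\ u 1 = -1 /\ u 2 = -1 /\ u 3 = -1 /\
    has_three_equal u /\
    forall v : Z -> Z, is_4chain v -> has_three_equal v -> same_chain v u.
Proof.
  exists u. split; [exact u_chain|].
  split; [vm_compute; reflexivity|]. split; [vm_compute; reflexivity|].
  split; [vm_compute; reflexivity|]. split; [vm_compute; reflexivity|].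
  split. { exists 0. split; vm_compute; reflexivity. }
  intros v C [n [E1 E2]].
  pose proof (C (n+1)) as R. replace (n+1-1) with n in R by lia.
  replace (n+1+1) with (n+2) in R by lia. rewrite E1, <- E2 in R.
  destruct (triple _ _ (f4_12 (n+1)) R) as [F A].
  destruct (f4_cases (n+1)) as [[F' _]|[_ M]]; [lia|].
  pose proof (Z.mod_pos_bound (n+1) 4). pose proof (Z.div_mod (n+1) 4).
  set (q := (n+1)/4) in *.
  pose proof (shift_chain v q C) as Cw.
  assert (W : forall m, v (4*q+m) = u m).
  { destruct M as [M|M].
    - apply (chain_uniq _ _ 0 Cw u_chain).
      + replace (4*q+0) with n by lia. cbv beta; rewrite E1, A. vm_compute; reflexivity.
      + replace (4*q+(0+1)) with (n+1) by lia. cbv beta; rewrite A. vm_compute; reflexivity.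
    - apply (chain_uniq _ _ 1 Cw u_chain).
      + replace (4*q+1) with n by lia. cbv beta; rewrite E1, A. vm_compute; reflexivity.
      + replace (4*q+(1+1)) with (n+1) by lia. cbv beta; rewrite A. vm_compute; reflexivity. }
  exists (-(4*q)). left. intro m. rewrite <- W. f_equal. lia.
Qed.
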